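(* $\ker\Lambda$ is the smallest ideal of $\mathcal H_{CK}$ which is stable under $B_+$ and contains $a\bowtie b-ab$ for all nonempty rooted trees $a,b$.
   Context: Let $k$ be a field of characteristic $0$. $\mathcal H_{CK}$ is the free commutative $k$-algebra on isomorphism classes of nonempty (non-planar, finite) rooted trees, i.e. rooted forests with unit the empty forest $\mathbf 1$; $B_+:\mathcal H_{CK}\to\mathcal H_{CK}$ is the linear map sending a forest $t_1\cdots t_n$ to the tree obtained by joining the roots of $t_1,\dots,t_n$ to a new root ($B_+(\mathbf 1)=\bullet$, the one-vertex tree). $\mathcal A=k[x]$ carries the quasi-shuffle product $\diamond$ determined by $\mathbf 1\diamond u=u\diamond\mathbf 1=u$ and $x^k\diamond x^l=(x^{k-1}\diamond x^l)x+(x^k\diamond x^{l-1})x+(x^{k-1}\diamond x^{l-1})x$ for $k,l\ge1$. $\Lambda:\mathcal H_{CK}\to(\mathcal A,\diamond)$ is the unique unital algebra morphism with $\Lambda(B_+(t_1\cdots t_n))=(\Lambda(t_1)\diamond\cdots\diamond\Lambda(t_n))x$. For trees $a=B_+(a_1\cdots a_n)$, $b=B_+(b_1\cdots b_p)$: $a\circ b=B_+(a_1\cdots a_nb)$, $a\times b=B_+(a_1\cdots a_nb_1\cdots b_p)$, $a\bowtie b=a\circ b+b\circ a+a\times b$; $ab$ is the product (forest) in $\mathcal H_{CK}$. *)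

(* Defs.v *)
From HB Require Import structures.
From mathcomp Require Import all_boot all_order all_algebra.
Set Implicit Arguments. Unset Strict Implicit. Unset Printing Implicit Defensive.
Import Order.TTheory GRing.Theory Num.Theory.
Local Open Scope ring_scope.

(* A (planar) rooted tree: a root together with the list of its subtrees.
   Every tree has at least one vertex (its root). *)
Inductive rtree := RNode of seq rtree.

Fixpoint rt_enc (t : rtree) : GenTree.tree unit :=
  let: RNode ts := t in GenTree.Node 0 (map rt_enc ts).

Fixpoint rt_dec (g : GenTree.tree unit) : rtree :=
  match g with
  | GenTree.Leaf _ => RNode [::]
  | GenTree.Node _ gs => RNode (map rt_dec gs)
  end.

Lemma rt_encK_aux : forall t, rt_dec (rt_enc t) = t.
Proof.
fix IH 1; case=> ts /=; congr RNode.
elim: ts => [|t ts IHts] //=; by rewrite IH IHts.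
Qed.

Lemma rt_encK : cancel rt_enc rt_dec.
Proof. exact: rt_encK_aux. Qed.

HB.instance Definition _ := Countable.copy rtree (can_type rt_encK).

(* a fixed total order on planar trees, used only to pick canonical representatives *)
Definition rt_le (a b : rtree) : bool := (pickle a <= pickle b)%N.

(* canonical representative of the isomorphism class of a tree: children
   recursively canonicalised and sorted *)
Fixpoint canonT (t : rtree) : rtree :=
  let: RNode ts := t in RNode (sort rt_le (map canonT ts)).

(* forests = finite multisets of trees; canonical form of a forest *)
Definition forest := seq rtree.
Definition canonF (f : forest) : forest := sort rt_le (map canonT f).

(* An element of H_CK is represented by a finite formal sum  sum_i c_i f_i
   (list of pairs (c_i, f_i)); the empty forest [::] is the unit 1.
   Two representatives denote the same element iff all coefficients agree,
   where forests are compared up to isomorphism. *)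
Definition hck (K : fieldType) := seq (K * forest).

Section HCK.
Variable K : fieldType.

Definition hcoef (h : hck K) (f : forest) : K :=
  \sum_(p <- h | canonF p.2 == canonF f) p.1.

Definition heq (h g : hck K) : Prop := forall f, hcoef h f = hcoef g f.

Definition hzero : hck K := [::].
Definition hadd (h g : hck K) : hck K := h ++ g.
Definition hopp (h : hck K) : hck K := [seq (- p.1, p.2) | p <- h].
Definition hmul (h g : hck K) : hck K :=
  [seq (p.1 * q.1, p.2 ++ q.2) | p <- h, q <- g].
Definition hforest (f : forest) : hck K := [:: (1, f)].
Definition hBplus (h : hck K) : hck K := [seq (p.1, [:: RNode p.2]) | p <- h].
End HCK.

Definition tcirc (a b : rtree) : rtree :=
  let: RNode as_ := a in RNode (rcons as_ b).
Definition ttimes (a b : rtree) : rtree :=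
  let: RNode as_ := a in let: RNode bs := b in RNode (as_ ++ bs).

Definition bowtie_rel (K : fieldType) (a b : rtree) : hck K :=
  [:: (1, [:: tcirc a b]); (1, [:: tcirc b a]); (1, [:: ttimes a b]);
      (-1, [:: a; b])].

Section QSh.
Variable K : fieldType.

Fixpoint qsh_mon (i : nat) : nat -> {poly K} :=
  match i with
  | 0 => fun j => 'X ^+ j
  | i'.+1 => fix qm (j : nat) : {poly K} :=
      match j with
      | 0 => 'X ^+ i'.+1
      | j'.+1 => (qsh_mon i' j'.+1 + qm j' + qsh_mon i' j') * 'X
      end
  end.

Definition qsh (p q : {poly K}) : {poly K} :=
  \sum_(i < size p) \sum_(j < size q) (p`_i * q`_j) *: qsh_mon i j.

Fixpoint lamT (t : rtree) : {poly K} :=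
  let: RNode ts := t in foldr qsh 1 (map lamT ts) * 'X.

Definition lamF (f : forest) : {poly K} := foldr qsh 1 (map lamT f).

Definition Lambda (h : hck K) : {poly K} := \sum_(p <- h) p.1 *: lamF p.2.
End QSh.

Definition is_hck_ideal (K : fieldType) (J : hck K -> Prop) : Prop :=
  [/\ forall h g, J h -> heq h g -> J g,
      J (hzero K),
      forall h g, J h -> J g -> J (hadd h g),
      forall h, J h -> J (hopp h) &
      forall h g, J h -> J (hmul g h)].

Definition Bplus_stable (K : fieldType) (J : hck K -> Prop) : Prop :=
  forall h, J h -> J (hBplus h).

Definition contains_bowtie_rels (K : fieldType) (J : hck K -> Prop) : Prop :=
  forall a b : rtree, J (bowtie_rel K a b).

Definition in_min_ideal (K : fieldType) (h : hck K) : Prop :=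
  forall J : hck K -> Prop,
    is_hck_ideal J -> Bplus_stable J -> contains_bowtie_rels J -> J h.

(* Main.v *)
Set Warnings "-notation-overridden,-ambiguous-paths,-deprecated".
Require Import Defs.
From HB Require Import structures.
From mathcomp Require Import all_boot all_order all_algebra.
Set Implicit Arguments. Unset Strict Implicit. Unset Printing Implicit Defensive.
Import GRing.Theory.
Local Open Scope ring_scope.

Section Ev.
Variable K : fieldType.
Implicit Types p q : {poly K}.

Definition ev p (m : nat) : K := \sum_(i < m.+1) p`_i * ('C(m, i))%:R.

Lemma sum_widen0 (F : nat -> K) n1 n2 : (n1 <= n2)%N ->
  (forall i, (n1 <= i)%N -> (i < n2)%N -> F i = 0) ->
  \sum_(i < n1) F i = \sum_(i < n2) F i.
Proof.
move=> le12 H0; rewrite (big_ord_widen n2 F le12) big_mkcond /=.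
apply: eq_bigr => i _; case: ifP => // /negbT; rewrite -leqNgt => h.
by rewrite H0.
Qed.

Lemma evE p m n : (size p <= n)%N || (m < n)%N ->
  ev p m = \sum_(i < n) p`_i * ('C(m, i))%:R.
Proof.
move=> h; rewrite /ev.
have Z : forall i, (size p <= i)%N || (m < i)%N -> p`_i * ('C(m, i))%:R = 0.
  move=> i /orP[hi|hi]; first by rewrite nth_default // mul0r.
  by rewrite bin_small // mulr0.
case: (leqP m.+1 n) => hmn.
  by rewrite (@sum_widen0 (fun i => p`_i * ('C(m, i))%:R) m.+1 n hmn) // => i hi _; apply: Z; rewrite hi orbT.
rewrite (@sum_widen0 (fun i => p`_i * ('C(m, i))%:R) n m.+1 (ltnW hmn)) //.
move=> i hi _; apply: Z; move: h => /orP[hs|hs]; last by rewrite ltnS leqNgt hs in hmn.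
by rewrite (leq_trans hs hi).
Qed.

Lemma ev0 m : ev 0 m = 0.
Proof. by rewrite /ev big1 // => i _; rewrite coef0 mul0r. Qed.

Lemma evD p q m : ev (p + q) m = ev p m + ev q m.
Proof. by rewrite /ev -big_split /=; apply: eq_bigr => i _; rewrite coefD mulrDl. Qed.

Lemma evZ c p m : ev (c *: p) m = c * ev p m.
Proof. by rewrite /ev mulr_sumr; apply: eq_bigr => i _; rewrite coefZ mulrA. Qed.

Lemma evN p m : ev (- p) m = - ev p m.
Proof. by rewrite -scaleN1r evZ mulN1r. Qed.

Lemma ev_sum (I : Type) (r : seq I) (F : I -> {poly K}) m :
  ev (\sum_(i <- r) F i) m = \sum_(i <- r) ev (F i) m.
Proof.
elim: r => [|x r IH]; first by rewrite !big_nil ev0.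
by rewrite !big_cons evD IH.
Qed.

Lemma ev1 m : ev 1 m = 1.
Proof.
rewrite /ev big_ord_recl coef1 bin0 mulr1 /= big1 ?addr0 // => i _.
by rewrite coef1 /= mul0r.
Qed.

Lemma evMX0 q : ev (q * 'X) 0 = 0.
Proof. by rewrite /ev big_ord1 coefMX /= mul0r. Qed.

Lemma evMXS q m : ev (q * 'X) m.+1 = ev (q * 'X) m + ev q m.
Proof.
rewrite /ev big_ord_recl coefMX /= mul0r add0r.
rewrite [X in X + _]big_ord_recl coefMX /= mul0r add0r.
under eq_bigr => i _ do rewrite coefMX /= binS natrD mulrDr.
rewrite big_split /=; congr (_ + _).
by rewrite big_ord_recr /= bin_small // mulr0 addr0; apply: eq_bigr => i _; rewrite coefMX.
Qed.

Lemma evMX q m : ev (q * 'X) m = \sum_(j < m) ev q j.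
Proof.
elim: m => [|m IH]; first by rewrite evMX0 big_ord0.
by rewrite evMXS IH big_ord_recr.
Qed.

Lemma ev_inj p : (forall m, ev p m = 0) -> p = 0.
Proof.
move=> H; apply/polyP => k; rewrite coef0.
elim: k {-2}k (leqnn k) => [|n IH] k hk.
  move: hk; rewrite leqn0 => /eqP ->.
  by have := H 0%N; rewrite /ev big_ord1 bin0 mulr1.
have := H k; rewrite /ev big_ord_recr /= binn mulr1 big1 ?add0r //.
move=> i _; rewrite IH ?mul0r //.
by rewrite -ltnS (leq_trans (ltn_ord i) hk).
Qed.

Lemma acn (a b c d : nat) : (a + (b + c + d) = a + c + (b + d))%N.
Proof. by rewrite !addnA (addnAC a b c). Qed.

Lemma evXn j m : ev ('X^j) m = ('C(m, j))%:R.
Proof.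
elim: j m => [|j IHj] m; first by rewrite expr0 ev1 bin0.
rewrite exprSr; elim: m => [|m IHm]; first by rewrite evMX0 bin0n.
by rewrite evMXS IHm IHj binS natrD.
Qed.

Lemma ev_qsh_mon i j m : ev (qsh_mon K i j) m = ('C(m, i) * 'C(m, j))%:R.
Proof.
elim: i j m => [|i IHi] j m; first by rewrite /= evXn bin0 mul1n.
elim: j m => [|j IHj] m; first by rewrite /= evXn bin0 muln1.
have -> : qsh_mon K i.+1 j.+1 = (qsh_mon K i j.+1 + qsh_mon K i.+1 j + qsh_mon K i j) * 'X by [].
elim: m => [|m IHm]; first by rewrite evMX0 bin0n.
rewrite evMXS IHm !evD IHi IHj IHi -!natrD; congr (_%:R).
rewrite !binS !mulnDl !mulnDr.
by rewrite acn.
Qed.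

Lemma ev_qsh p q m : ev (qsh p q) m = ev p m * ev q m.
Proof.
have E1 : forall r : {poly K}, ev r m = \sum_(i < size r) r`_i * ('C(m, i))%:R.
  by move=> r; apply: evE; rewrite leqnn.
rewrite /qsh ev_sum E1 (E1 q) mulr_suml.
apply: eq_bigr => i _; rewrite ev_sum mulr_sumr; apply: eq_bigr => j _.
rewrite evZ ev_qsh_mon natrM.
by rewrite mulrACA.
Qed.
End Ev.



Section Lam.
Variable K : fieldType.

Definition evF (f : forest) m : K := \prod_(t <- f) ev (lamT K t) m.

Lemma ev_lamF f m : ev (lamF K f) m = evF f m.
Proof.
rewrite /evF; elim: f => [|t f IH]; first by rewrite big_nil ev1.
by rewrite big_cons -IH /lamF /= ev_qsh.
Qed.

Lemma ev_node ts m : ev (lamT K (RNode ts)) m = \sum_(j < m) evF ts j.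
Proof.
have -> : lamT K (RNode ts) = lamF K ts * 'X by [].
by rewrite evMX; apply: eq_bigr => j _; rewrite ev_lamF.
Qed.

Lemma ev_eq (p q : {poly K}) : (forall m, ev p m = ev q m) -> p = q.
Proof.
move=> H; apply/eqP; rewrite -subr_eq0; apply/eqP; apply: ev_inj => m.
by rewrite evD evN H subrr.
Qed.

Lemma qsh_comm (p q : {poly K}) : qsh p q = qsh q p.
Proof. by apply: ev_eq => m; rewrite !ev_qsh mulrC. Qed.

Lemma lamF_perm f g : perm_eq f g -> lamF K f = lamF K g.
Proof. by move=> pfg; apply: ev_eq => m; rewrite !ev_lamF /evF (perm_big _ pfg). Qed.

Lemma perm_sort' (s : seq rtree) : perm_eq (sort rt_le s) s.
Proof. by rewrite perm_sort. Qed.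

Lemma lamT_canon : forall t, lamT K (canonT t) = lamT K t.
Proof.
fix IH 1; case=> ts.
have -> : lamT K (canonT (RNode ts)) = lamF K (sort rt_le (map canonT ts)) * 'X by [].
have -> : lamT K (RNode ts) = lamF K ts * 'X by [].
rewrite (lamF_perm (perm_sort' _)); congr (_ * _).
rewrite /lamF; congr (foldr _ _ _).
elim: ts => [|t ts IHts] //=; by rewrite IH IHts.
Qed.

Lemma lamF_canon f : lamF K (canonF f) = lamF K f.
Proof.
rewrite /canonF (lamF_perm (perm_sort' _)) /lamF; congr (foldr _ _ _).
by elim: f => [|t f IHf] //=; rewrite lamT_canon IHf.
Qed.

Lemma ev_Lambda (h : hck K) m :
  ev (Lambda h) m = \sum_(p <- h) p.1 * evF p.2 m.
Proof. by rewrite /Lambda ev_sum; apply: eq_bigr => p _; rewrite evZ ev_lamF. Qed.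

Lemma Lambda0 (h : hck K) : Lambda h = 0 <-> forall m, ev (Lambda h) m = 0.
Proof.
split=> [-> m|H]; first exact: ev0.
exact: ev_inj.
Qed.

Lemma group_sum (I : Type) (T : eqType) (r : seq I) (key : I -> T) (keys : seq T)
  (c : I -> K) (W : T -> {poly K}) :
  uniq keys -> all (fun i => key i \in keys) r ->
  \sum_(i <- r) c i *: W (key i) =
  \sum_(k <- keys) (\sum_(i <- r | key i == k) c i) *: W k.
Proof.
move=> uk; elim: r => [|x r IH] /=.
  by rewrite big_nil big1 // => k _; rewrite big_nil scale0r.
case/andP=> kx ar; rewrite big_cons IH //.
under [RHS]eq_bigr => k _ do rewrite big_cons.
have -> : \sum_(k <- keys) (if key x == k then c x + \sum_(i <- r | key i == k) c i
                        else \sum_(i <- r | key i == k) c i) *: W k =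
   \sum_(k <- keys) ((if key x == k then c x else 0) *: W k +
                      (\sum_(i <- r | key i == k) c i) *: W k).
  by apply: eq_bigr => k _; case: ifP => _; rewrite ?scalerDl ?scale0r ?add0r.
rewrite big_split /=; congr (_ + _).
rewrite (bigD1_seq (key x)) //= eqxx big1 ?addr0 // => k.
by rewrite eq_sym => /negbTE ->; rewrite scale0r.
Qed.

Lemma Lambda_heq (h g : hck K) : heq h g -> Lambda h = Lambda g.
Proof.
move=> hg.
pose keys := undup [seq canonF p.2 | p <- h ++ g].
have E : forall h0 : hck K, all (fun p => canonF p.2 \in keys) h0 ->
   Lambda h0 = \sum_(k <- keys) (\sum_(p <- h0 | canonF p.2 == k) p.1) *: lamF K k.
  move=> h0 a0; rewrite /Lambda.
  under eq_bigr => p _ do rewrite -lamF_canon.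
  by rewrite (group_sum (fun p : K * forest => p.1) (lamF K) (undup_uniq _) a0).
have Ah : all (fun p => canonF p.2 \in keys) h.
  by apply/allP => p hp; rewrite mem_undup; apply/mapP; exists p; rewrite // mem_cat hp.
have Ag : all (fun p => canonF p.2 \in keys) g.
  by apply/allP => p hp; rewrite mem_undup; apply/mapP; exists p; rewrite // mem_cat hp orbT.
rewrite (E h Ah) (E g Ag); apply: eq_big_seq => k; rewrite mem_undup => /mapP[p0 _ ->].
by have := hg p0.2; rewrite /hcoef => ->.
Qed.
End Lam.



Section Easy.
Variable K : fieldType.
Implicit Types h g : hck K.

Lemma evF_cat (f1 f2 : forest) m : evF K (f1 ++ f2) m = evF K f1 m * evF K f2 m.
Proof. by rewrite /evF big_cat. Qed.

Lemma evF1 t m : evF K [:: t] m = ev (lamT K t) m.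
Proof. by rewrite /evF big_cons big_nil mulr1. Qed.

Lemma evF_rcons (f : forest) t m : evF K (rcons f t) m = evF K f m * ev (lamT K t) m.
Proof. by rewrite -cats1 evF_cat evF1. Qed.

Lemma evL_cat h g m : ev (Lambda (hadd h g)) m = ev (Lambda h) m + ev (Lambda g) m.
Proof. by rewrite !ev_Lambda /hadd big_cat. Qed.

Lemma evL_opp h m : ev (Lambda (hopp h)) m = - ev (Lambda h) m.
Proof.
rewrite !ev_Lambda /hopp big_map -sumrN; apply: eq_bigr => p _; by rewrite mulNr.
Qed.

Lemma evL_mul g h m : ev (Lambda (hmul g h)) m = ev (Lambda g) m * ev (Lambda h) m.
Proof.
rewrite !ev_Lambda /hmul big_allpairs_dep /= mulr_suml; apply: eq_bigr => p _.
rewrite mulr_sumr; apply: eq_bigr => q _ /=.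
by rewrite evF_cat mulrACA.
Qed.

Lemma evL_B h m : ev (Lambda (hBplus h)) m = \sum_(j < m) ev (Lambda h) j.
Proof.
rewrite ev_Lambda /hBplus big_map.
under eq_bigr => p _ do rewrite /= evF1 ev_node mulr_sumr.
rewrite exchange_big /=; apply: eq_bigr => j _; by rewrite ev_Lambda.
Qed.

Lemma prod_sums (a b : nat -> K) m :
  (\sum_(j < m) a j) * (\sum_(j < m) b j) =
  \sum_(j < m) (a j * \sum_(i < j) b i + b j * \sum_(i < j) a i + a j * b j).
Proof.
elim: m => [|m IH]; first by rewrite !big_ord0 mul0r.
rewrite !big_ord_recr /= -IH mulrDl !mulrDr -!addrA; congr (_ + _).
by rewrite addrCA [_ * b m]mulrC addrA.
Qed.

Lemma evL_bowtie a b m : ev (Lambda (bowtie_rel K a b)) m = 0.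
Proof.
case: a => A; case: b => B.
rewrite ev_Lambda /bowtie_rel !big_cons big_nil /= !evF1 !ev_node.
have E2 : forall x y : rtree, evF K [:: x; y] m = ev (lamT K x) m * ev (lamT K y) m.
  by move=> x y; rewrite /evF !big_cons big_nil mulr1.
rewrite E2 !mul1r mulN1r addr0 !ev_node prod_sums !big_split /=.
under eq_bigr => j _ do rewrite evF_rcons ev_node.
under [X in _ + (X + _)]eq_bigr => j _ do rewrite evF_rcons ev_node.
under [X in _ + (_ + (X + _))]eq_bigr => j _ do rewrite evF_cat.
by rewrite !addrA subrr.
Qed.
Lemma easy_dir h : in_min_ideal h -> Lambda h = 0.
Proof.
move=> H; apply: (H (fun h => Lambda h = 0)); first split.
- by move=> h0 g0 H0 hg; rewrite -(Lambda_heq hg).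
- by rewrite /Lambda big_nil.
- by move=> h0 g0 /Lambda0 H1 /Lambda0 H2; apply/Lambda0 => m; rewrite evL_cat H1 H2 addr0.
- by move=> h0 /Lambda0 H1; apply/Lambda0 => m; rewrite evL_opp H1 oppr0.
- by move=> h0 g0 /Lambda0 H1; apply/Lambda0 => m; rewrite evL_mul H1 mulr0.
- by move=> h0 /Lambda0 H1; apply/Lambda0 => m; rewrite evL_B big1.
- by move=> a b; apply/Lambda0 => m; rewrite evL_bowtie.
Qed.
End Easy.



Section Hard.
Variable K : fieldType.
Implicit Types h g k : hck K.

Lemma hcoef_cat h g f : hcoef (hadd h g) f = hcoef h f + hcoef g f.
Proof. by rewrite /hcoef /hadd big_cat. Qed.

Lemma hcoef_opp h f : hcoef (hopp h) f = - hcoef h f.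
Proof. by rewrite /hcoef /hopp big_map sumrN. Qed.

Lemma hcoef_nil f : hcoef (hzero K) f = 0.
Proof. by rewrite /hcoef big_nil. Qed.

Lemma hcoef_mul k h f : hcoef (hmul k h) f =
  \sum_(p <- k) \sum_(q <- h) (if canonF (p.2 ++ q.2) == canonF f then p.1 * q.1 else 0).
Proof. by rewrite /hcoef big_mkcond big_allpairs_dep. Qed.

Lemma heq_cons c c' (f f' : forest) h h' : c = c' -> canonF f = canonF f' -> heq h h' ->
  heq ((c, f) :: h) ((c', f') :: h').
Proof. by move=> -> ef H g; rewrite /hcoef !big_cons /= ef; have := H g; rewrite /hcoef => ->. Qed.

Lemma heq_perm h h' : perm_eq h h' -> heq h h'.
Proof. by move=> ph g; rewrite /hcoef (perm_big _ ph). Qed.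

Lemma heq_trans h g k : heq h g -> heq g k -> heq h k.
Proof. by move=> H1 H2 f; rewrite H1 H2. Qed.

Lemma heq_sym h g : heq h g -> heq g h.
Proof. by move=> H f; rewrite H. Qed.

Lemma canonF_perm (f g : forest) : perm_eq f g -> canonF f = canonF g.
Proof.
move=> pfg; rewrite /canonF; apply/perm_sortP; last exact: perm_map.
- by move=> x y; exact: leq_total.
- by move=> y x z; exact: leq_trans.
- by move=> x y /anti_leq /(pcan_inj pickleK).
Qed.

Variable M : hck K -> Prop.
Definition cong h g := M (hadd h (hopp g)).

Section WithIdeal.
Hypothesis HM : is_hck_ideal M.

Lemma M_heq h g : M h -> heq h g -> M g.
Proof. by case: HM => H _ _ _ _; apply: H. Qed.
Lemma M0 : M (hzero K).
Proof. by case: HM. Qed.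
Lemma Madd h g : M h -> M g -> M (hadd h g).
Proof. by case: HM => _ _ H _ _; apply: H. Qed.
Lemma Mopp h : M h -> M (hopp h).
Proof. by case: HM => _ _ _ H _; apply: H. Qed.
Lemma Mmul g h : M h -> M (hmul g h).
Proof. by case: HM => _ _ _ _ H; apply: H. Qed.

Lemma cong_heq h h' g g' : heq h h' -> heq g g' -> cong h g -> cong h' g'.
Proof.
move=> H1 H2 C; apply: (M_heq C) => f.
by rewrite !hcoef_cat !hcoef_opp H1 H2.
Qed.

Lemma cong_refl h : cong h h.
Proof. by apply: (M_heq M0) => f; rewrite hcoef_cat hcoef_opp hcoef_nil subrr. Qed.

Lemma cong_trans h g k : cong h g -> cong g k -> cong h k.
Proof.
move=> C1 C2; apply: (M_heq (Madd C1 C2)) => f.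
by rewrite !hcoef_cat !hcoef_opp addrA subrK.
Qed.

Lemma cong_add h g h' g' : cong h g -> cong h' g' -> cong (hadd h h') (hadd g g').
Proof.
move=> C1 C2; apply: (M_heq (Madd C1 C2)) => f.
by rewrite !hcoef_cat !hcoef_opp !hcoef_cat opprD addrACA.
Qed.

Lemma cong_mul k h g : cong h g -> cong (hmul k h) (hmul k g).
Proof.
move=> C; apply: (M_heq (Mmul k C)) => f.
rewrite hcoef_cat hcoef_opp !hcoef_mul -sumrN -big_split /=.
apply: eq_bigr => p _; rewrite /hadd /hopp big_cat big_map -sumrN /=; congr (_ + _).
by apply: eq_bigr => q _; case: ifP; rewrite ?mulrN ?oppr0.
Qed.
End WithIdeal.

Lemma cong_B (HB : Bplus_stable M) h g : cong h g -> cong (hBplus h) (hBplus g).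
Proof.
move=> C; have := HB _ C.
have -> : hBplus (hadd h (hopp g)) = hadd (hBplus h) (hopp (hBplus g)).
  rewrite /hBplus /hadd /hopp map_cat -!map_comp; congr (_ ++ _).
done.
Qed.

End Hard.



Fixpoint lad n : forest := if n is n'.+1 then [:: RNode (lad n')] else [::].
Fixpoint vT (t : rtree) : nat := let: RNode ts := t in (sumn (map vT ts)).+1.
Definition ld (f : forest) : nat := sumn (map vT f).

Lemma ld_lad n : ld (lad n) = n.
Proof. by elim: n => //= n; rewrite /ld /= => ->; rewrite addn0. Qed.

Lemma lad_eq a b : (lad a == lad b) = (a == b).
Proof. by apply/eqP/eqP => [E|->] //; have := congr1 ld E; rewrite !ld_lad. Qed.

Lemma canonF_lad n : canonF (lad n) = lad n.
Proof.
elim: n => //= n IH.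
rewrite /canonF /= sorted_sort //; last by move=> y x z; exact: leq_trans.
by rewrite -/(canonF (lad n)) IH.
Qed.

Section LCsec.
Variable K : fieldType.
Implicit Types h g r : hck K.

Lemma lamF_lad n : lamF K (lad n) = 'X^n.
Proof.
elim: n => [|n IH] //; apply: ev_eq => m.
rewrite ev_lamF evF1 exprSr -IH; congr (ev _ m).
Qed.

Definition LC r := forall p, p \in r -> p.2 = lad (ld p.2).

Lemma LC_zero r : LC r -> Lambda r = 0 -> heq r (hzero K).
Proof.
move=> HL L0.
have E : Lambda r = \sum_(p <- r) p.1 *: 'X^(ld p.2).
  by rewrite /Lambda; apply: eq_big_seq => p hp; rewrite {1}(HL p hp) lamF_lad.
have C : forall k, \sum_(p <- r | ld p.2 == k) p.1 = 0.
  move=> k; rewrite big_mkcond /=; have := congr1 (fun q : {poly K} => q`_k) L0.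
  rewrite /= E coef0 coef_sum => Hk; rewrite -[RHS]Hk; apply: eq_bigr => p _.
  by rewrite coefZ coefXn eq_sym; case: ifP; rewrite ?mulr1 ?mulr0.
move=> f; rewrite hcoef_nil /hcoef.
case: (boolP (has (fun p : K * forest => canonF p.2 == canonF f) r)) => [/hasP [p0 hp0 e0] | nh];
  last by rewrite big_hasC.
rewrite -big_filter (@eq_in_filter _ _ (fun p : K * forest => ld p.2 == ld p0.2)) ?big_filter ?C //.
move=> p hp /=; rewrite -(eqP e0) (HL p hp) (HL p0 hp0) !canonF_lad !ld_lad lad_eq.
done.
Qed.
End LCsec.



Lemma vF_circ a b (R : forest) : ld (tcirc a b :: R) = ld (a :: b :: R).
Proof.
case: a => A; rewrite /ld /= map_rcons sumn_rcons.
by rewrite !addSn !addnA.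
Qed.

Lemma vF_times a b (R : forest) : (ld (ttimes a b :: R) <= ld (a :: b :: R))%N.
Proof.
case: a => A; case: b => B; rewrite /ld /= map_cat sumn_cat.
by rewrite !addSn !addnS !addnA ltnS leqnSn.
Qed.

Lemma canonF_cat1 (R : forest) x : canonF (R ++ [:: x]) = canonF (x :: R).
Proof. by apply: canonF_perm; rewrite perm_catC. Qed.

Lemma canonF_cat2 (R : forest) x y : canonF (R ++ [:: x; y]) = canonF (x :: y :: R).
Proof. by apply: canonF_perm; rewrite perm_catC. Qed.

Section Red.
Variable K : fieldType.
Variable M : hck K -> Prop.
Implicit Types h g r : hck K.
Hypothesis HM : is_hck_ideal M.
Hypothesis HB : Bplus_stable M.
Hypothesis HR : contains_bowtie_rels M.

Lemma bow_cong a b (R : forest) :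
  cong M (hforest K (a :: b :: R))
    (hadd (hforest K (tcirc a b :: R))
      (hadd (hforest K (tcirc b a :: R)) (hforest K (ttimes a b :: R)))).
Proof.
have H := Mopp HM (Mmul HM (hforest K R) (HR a b)).
apply: (M_heq HM H); rewrite /cong.
apply: (@heq_trans _ _ [:: (-1, tcirc a b :: R); (-1, tcirc b a :: R);
   (-1, ttimes a b :: R); (1, a :: b :: R)]).
  rewrite /hopp /hmul /bowtie_rel /hforest /=.
  apply: heq_cons; rewrite ?mulr1 ?canonF_cat1 //.
  apply: heq_cons; rewrite ?mulr1 ?canonF_cat1 //.
  apply: heq_cons; rewrite ?mulr1 ?canonF_cat1 //.
  apply: heq_cons; rewrite ?mul1r ?opprK ?canonF_cat2 //.
apply: heq_perm; rewrite /hadd /hopp /hforest /=.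
by rewrite perm_sym -perm_rcons.
Qed.

Lemma LC_B r : LC r -> LC (hBplus r).
Proof.
move=> HL p /mapP [q hq ->] /=; rewrite (HL q hq) /ld /= addn0.
by rewrite -/(ld (lad (ld q.2))) ld_lad.
Qed.

Lemma LC_cat r1 r2 : LC r1 -> LC r2 -> LC (hadd r1 r2).
Proof. by move=> H1 H2 p; rewrite mem_cat => /orP[] hp; [apply: H1 | apply: H2]. Qed.

Lemma red_forest : forall f, exists2 r, LC r & cong M (hforest K f) r.
Proof.
have base : exists2 r, LC r & cong M (hforest K [::]) r.
  exists (hforest K [::]); last exact: cong_refl.
  by move=> p; rewrite mem_seq1 => /eqP ->.
move=> f; move: {2}(ld f) (leqnn (ld f)) => n; elim: n f => [|n IHn] f hv.
  case: f hv => [|t f] hv //; by case: t hv.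
move: {2}(size f) (leqnn (size f)) => s; elim: s f hv => [|s IHs] f hv hs.
  by case: f hv hs.
case: f hv hs => [|t [|t' R]] hv hs //.
  case: t hv hs => ts hv hs.
  have hts : (ld ts <= n)%N by move: hv; rewrite /ld /= addn0 ltnS.
  have [r0 L0 C0] := IHn ts hts.
  exists (hBplus r0); first exact: LC_B.
  exact: (cong_B HB C0).
have hs' : forall x, (size (x :: R) <= s)%N by [].
have v1 : (ld (tcirc t t' :: R) <= n.+1)%N by rewrite vF_circ.
have v2 : (ld (tcirc t' t :: R) <= n.+1)%N by rewrite vF_circ /ld /= addnCA.
have [r1 L1 C1] := IHs (tcirc t t' :: R) v1 (hs' _).
have [r2 L2 C2] := IHs (tcirc t' t :: R) v2 (hs' _).
have [r3 L3 C3] := IHs (ttimes t t' :: R) (leq_trans (vF_times _ _ _) hv) (hs' _).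
exists (hadd r1 (hadd r2 r3)); first by apply: LC_cat => //; apply: LC_cat.
apply: (cong_trans HM (bow_cong t t' R)).
by apply: (cong_add HM C1); apply: (cong_add HM C2).
Qed.

Lemma red_all : forall h, exists2 r, LC r & cong M h r.
Proof.
elim=> [|[c f] h IH].
  by exists [::] => //; rewrite /cong /=; apply: (M0 HM).
have [r1 L1 C1] := red_forest f.
have [r2 L2 C2] := IH.
exists (hadd (hmul [:: (c, [::])] r1) r2).
  apply: LC_cat => // p /allpairsP [[x q] [/= hx hq ->]] /=.
  by move: hx; rewrite mem_seq1 => /eqP -> /=; apply: L1.
apply: (cong_add HM (h := [:: (c, f)])) => //.
apply: (cong_heq HM _ (fun f => erefl) (cong_mul HM [:: (c, [::])] C1)).
by rewrite /hmul /hforest /=; apply: heq_cons; rewrite ?mulr1.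
Qed.
End Red.



Lemma min_ideal (K : fieldType) : is_hck_ideal (@in_min_ideal K).
Proof.
split.
- by move=> h g Hh hg J HJ HB HR; case: (HJ) => H _ _ _ _; apply: H (Hh J HJ HB HR) hg.
- by move=> J HJ _ _; case: HJ.
- by move=> h g Hh Hg J HJ HB HR; case: (HJ) => _ _ H _ _; apply: H (Hh J HJ HB HR) (Hg J HJ HB HR).
- by move=> h Hh J HJ HB HR; case: (HJ) => _ _ _ H _; apply: H (Hh J HJ HB HR).
- by move=> h g Hh J HJ HB HR; case: (HJ) => _ _ _ _ H; apply: H (Hh J HJ HB HR).
Qed.

Lemma min_B (K : fieldType) : Bplus_stable (@in_min_ideal K).
Proof. by move=> h Hh J HJ HB HR; apply: HB (Hh J HJ HB HR). Qed.

Lemma min_R (K : fieldType) : contains_bowtie_rels (@in_min_ideal K).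
Proof. by move=> a b J HJ HB HR; apply: HR. Qed.

Unset Implicit Arguments.
Theorem mainTheorem14 (K : fieldType) (charK0 : [pchar K] =i pred0) :
  forall h : hck K, Lambda h = 0 <-> in_min_ideal h.
Proof.
move=> h; split; last exact: easy_dir.
move=> L0.
have HM := @min_ideal K.
have [r Lr Cr] := red_all HM (@min_B K) (@min_R K) h.
have Lr0 : Lambda r = 0.
  have := easy_dir Cr; move/Lambda0 => H; apply/Lambda0 => m.
  move: (H m); rewrite evL_cat evL_opp L0 ev0 add0r => /eqP; rewrite oppr_eq0 => /eqP.
  done.
have Mr : in_min_ideal r.
  by apply: (M_heq HM (M0 HM)); apply: heq_sym; apply: LC_zero.
apply: (M_heq HM (Madd HM Cr Mr)) => f.
by rewrite !hcoef_cat hcoef_opp subrK.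
Qed.
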